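(* Let $d\ge 3$, let $q$ be a prime power, let $2\le k\le d/2$, and let $G$ be a group with $\mathrm{PSL}_d(q)\trianglelefteq G\le \mathrm{P}\Gamma\mathrm{L}_d(q)$, acting naturally on the set of $k$-dimensional subspaces of $\mathbb{F}_q^d$. Then $G$ is not $\mathrm{IBIS}$.
   Context: A base of a permutation group $G$ on $\Omega$ is a sequence $(\omega_1,\dots,\omega_\ell)$ of points with trivial pointwise stabilizer; it is irredundant if $G>G_{\omega_1}>\cdots>G_{\omega_1,\dots,\omega_\ell}=1$. $G$ is $\mathrm{IBIS}$ if all irredundant bases of $G$ have the same cardinality. *)

(* Defs.v *)
From HB Require Import structures.
From mathcomp Require Import all_boot all_order all_algebra all_fingroup all_field.
Set Implicit Arguments. Unset Strict Implicit. Unset Printing Implicit Defensive.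
Import GRing.Theory.
Local Open Scope ring_scope.

(* Points: k-dimensional subspaces of F^d, represented canonically by their
   row-space matrices <<M>>%MS (mxalgebra). *)
Definition is_ksub (F : fieldType) (d k : nat) (M : 'M[F]_d) : bool :=
  (<<M>>%MS == M) && (\rank M == k).

Definition ksub (F : finFieldType) (d k : nat) :=
  {M : 'M[F]_d | is_ksub k M}.

Definition slimage (F : fieldType) (d : nat) (sigma : F -> F) (A : 'M[F]_d)
  (U : 'M[F]_d) : 'M[F]_d := <<map_mx sigma U *m A>>%MS.

Definition PSL_on (F : finFieldType) (d k : nat) : {set {perm ksub F d k}} :=
  [set p : {perm ksub F d k} | [exists A : 'M[F]_d,
     (\det A == 1) && [forall U : ksub F d k, val (p U) == slimage id A (val U)]]].

(* p lies in PGammaL_d(q) (acting on k-subspaces): induced by a semilinear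
   map v |-> (v^sigma) *m A with A invertible and sigma a field automorphism
   (every ring endomorphism of a finite field is an automorphism). *)
Definition in_PGammaL (F : finFieldType) (d k : nat) (p : {perm ksub F d k}) : Prop :=
  exists (sigma : {rmorphism F -> F}) (A : 'M[F]_d),
    A \in unitmx /\ forall U : ksub F d k, val (p U) = slimage sigma A (val U).

Definition pstab (T : finType) (G : {set {perm T}}) (s : seq T) : {set {perm T}} :=
  G :&: [set g : {perm T} | all (fun x => g x == x) s].

Definition irredundant_base (T : finType) (G : {set {perm T}}) (s : seq T) : Prop :=
  (forall i, (i < size s)%N -> pstab G (take i.+1 s) \proper pstab G (take i s))
  /\ pstab G s = 1%g.

Definition IBIS (T : finType) (G : {set {perm T}}) : Prop :=
  forall s t : seq T, irredundant_base G s -> irredundant_base G t ->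
    size s = size t.

(* Main.v *)
Require Import Defs.
From mathcomp Require Import all_boot all_order all_algebra all_fingroup all_field.
From mathcomp Require Import zify.

Set Implicit Arguments. Unset Strict Implicit. Unset Printing Implicit Defensive.
Import GRing.Theory.


Section Abstract.
Variable T : finType.
Variable G : {group {perm T}}.

Definition strict (s : seq T) :=
  forall i, (i < size s)%N -> pstab G (take i.+1 s) \proper pstab G (take i s).

Lemma pstab_cat s t : pstab G (s ++ t) = pstab G s :&: [set g : {perm T} | all (fun x => g x == x) t].
Proof. by apply/setP => g; rewrite !inE all_cat andbA. Qed.

Lemma extend s : strict s -> exists u, irredundant_base G (s ++ u).
Proof.
have [n Hn] : exists n, (#|pstab G s| < n)%N by exists #|pstab G s|.+1.
elim: n s Hn => [|n IH] s Hn Hs //.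
case: (pstab G s =P 1%g) => [E|NE].
  by exists [::]; rewrite cats0; split.
have [g Hg Hg1] : exists2 g, g \in pstab G s & g != 1%g.
  apply/exists_inP; apply: contra_notT NE => /exists_inPn H.
  apply/eqP; rewrite eqEsubset; apply/andP; split.
    by apply/subsetP => g /H; rewrite negbK => /eqP ->; rewrite inE.
  rewrite sub1set !inE group1 /=; apply/allP => x _; by rewrite perm1.
have [x Hx] : exists x, g x != x.
  apply/existsP; apply: contraNT Hg1 => /existsPn H.
  apply/eqP/permP => x; rewrite perm1; apply/eqP; by have := H x; rewrite negbK.
have Hp : pstab G (s ++ [:: x]) \proper pstab G s.
  apply/properP; split; first by rewrite pstab_cat subsetIl.
  exists g => //; by rewrite pstab_cat !inE /= (negbTE Hx) andbF.
have Hs1 : strict (s ++ [:: x]).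
  move=> i; rewrite size_cat /= addn1 ltnS leq_eqVlt => /orP [/eqP ->|hi].
    by rewrite take_oversize ?size_cat ?addn1 // take_size_cat.
  by rewrite !takel_cat //; [apply: Hs | apply: ltnW].
have [u Hu] := IH _ (leq_trans (proper_card Hp) Hn) Hs1.
by exists (x :: u); rewrite -catA in Hu.
Qed.

Lemma not_IBIS_of s s' : strict s -> strict s' -> pstab G s = pstab G s' ->
  size s <> size s' -> ~ IBIS G.
Proof.
move=> Hs Hs' E Hne HI.
have [u [Hu1 Hu2]] := extend Hs.
have Eq w : pstab G (s' ++ w) = pstab G (s ++ w) by rewrite !pstab_cat E.
have Hirr : irredundant_base G (s' ++ u).
  split; last by rewrite Eq.
  move=> i; rewrite size_cat => hi.
  case: (ltnP i (size s')) => h.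
    by rewrite !takel_cat //; [apply: Hs' | apply: ltnW].
  have h1 : (i < size s') = false by rewrite ltnNge h.
  have h2 : (i.+1 < size s') = false by rewrite ltnNge (leq_trans h (leqnSn i)).
  rewrite !take_cat h1 h2 subSn // !Eq.
  have := Hu1 (size s + (i - size s')).
  have h3 : (size s + (i - size s') < size s) = false by rewrite ltnNge leq_addr.
  have h4 : ((size s + (i - size s')).+1 < size s) = false by rewrite ltnNge -addnS leq_addr.
  rewrite !take_cat h3 h4 -addnS !addKn.
  apply; rewrite size_cat; lia.
have := HI _ _ (conj Hu1 Hu2) Hirr; rewrite !size_cat => /eqP.
by rewrite eqn_add2r => /eqP.
Qed.
End Abstract.


Section Conc.
Local Open Scope ring_scope.
Variable F : finFieldType.
Variable d : nat.

Definition DS (S : {set 'I_d}) : 'M[F]_d := diag_mx (\row_i (i \in S)%:R).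

Lemma memDS S (v : 'rV[F]_d) :
  (v <= DS S)%MS = [forall m : 'I_d, (m \notin S) ==> (v 0 m == 0)].
Proof.
apply/idP/forallP.
  case/submxP => w -> m; apply/implyP => nm.
  by rewrite mul_mx_diag !mxE (negbTE nm) mulr0.
move=> H; apply/submxP; exists v; apply/matrixP => i m.
rewrite mul_mx_diag !mxE ord1; case: (boolP (m \in S)) => h; first by rewrite mulr1.
by have := H m; rewrite h /= => /eqP ->; rewrite mul0r.
Qed.

Lemma rank_DS S : \rank (DS S) = #|S|.
Proof.
pose f := @enum_val _ (mem S).
pose R : 'M[F]_(#|S|, d) := \matrix_(a, c) (f a == c)%:R.
have RRt : R *m R^T = 1%:M.
  apply/matrixP => a b; rewrite !mxE (bigD1 (f a)) //= big1 => [|c /negbTE hc].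
    by rewrite !mxE eqxx mul1r addr0 eq_sym (inj_eq enum_val_inj).
  by rewrite !mxE eq_sym hc mul0r.
have RD : R = R *m DS S.
  apply/matrixP => a c; rewrite mul_mx_diag !mxE.
  case: eqP => [<-|]; last by rewrite mul0r.
  by rewrite enum_valP mulr1.
have DR : (DS S <= R)%MS.
  apply/row_subP => j; case: (boolP (j \in S)) => jS.
    have E := enum_rankK_in jS jS.
    suff -> : row j (DS S) = row (enum_rank_in jS j) R by apply: row_sub.
    apply/rowP => m; rewrite !mxE /f E jS; by case: eqP.
  suff -> : row j (DS S) = 0 by apply: sub0mx.
  by apply/rowP => m; rewrite !mxE (negbTE jS) mul0rn.
have rR : \rank R = #|S|.
  apply/eqP; rewrite eqn_leq rank_leq_row /=.
  by rewrite -{1}(mxrank1 F #|S|) -RRt mxrankM_maxl.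
apply/eqP; rewrite eqn_leq -{1}rR mxrankS //= -{1}rR {1}RD mxrankM_maxr //.
Qed.
End Conc.


Section Conc2.
Local Open Scope ring_scope.
Variable F : finFieldType.
Variables d k : nat.
Hypothesis hk2 : (2 <= k)%N.
Hypothesis hkd : (k.*2 <= d)%N.

Definition inS (a b m : nat) : bool := (m == a) || (m == b) || (4 <= m < k.+2)%N.
Definition Sset a b : {set 'I_d} := [set i : 'I_d | inS a b i].

Lemma card_Sset a b : (a < b < 4)%N -> #|Sset a b| = k.
Proof.
move=> hab.
have -> : #|Sset a b| = count (inS a b) (iota 0 d).
  rewrite cardsE cardE /enum_mem -enumT size_filter -val_enum_ord count_map.
  by apply: eq_count => i.
have -> : d = (4 + ((k - 2) + (d - k.+2)))%N by lia.
rewrite iotaD iotaD !count_cat.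
have -> : count (inS a b) (iota 0 4) = 2%N.
  move: hab; case: a => [|[|[|[|a]]]]; case: b => [|[|[|[|b]]]] //=; lia.
have -> : count (inS a b) (iota (0 + 4)%N (k - 2)) = (k - 2)%N.
  rewrite (@eq_in_count _ _ predT) ?count_predT ?size_iota // => m.
  rewrite mem_iota /inS => /andP [h1 h2]; apply/orP; right; lia.
have -> : count (inS a b) (iota (0 + 4 + (k - 2))%N (d - k.+2)) = 0%N.
  rewrite (@eq_in_count _ _ pred0) ?count_pred0 // => m.
  rewrite mem_iota /inS => /andP [h1 h2]; apply/negbTE; lia.
lia.
Qed.

Definition Mpt a b : 'M[F]_d := <<DS F (Sset a b)>>%MS.

Lemma Mpt_ksub a b : (a < b < 4)%N -> is_ksub k (Mpt a b).
Proof.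
move=> h; rewrite /is_ksub /Mpt genmx_id eqxx /=.
by rewrite genmxE rank_DS card_Sset.
Qed.

Lemma memMpt a b (v : 'rV[F]_d) :
  (v <= Mpt a b)%MS = [forall m : 'I_d, ~~ inS a b m ==> (v 0 m == 0)].
Proof.
rewrite /Mpt genmxE memDS; apply: eq_forallb => m; by rewrite inE.
Qed.
End Conc2.


Section Conc3.
Local Open Scope ring_scope.
Variable F : finFieldType.
Variables d k : nat.

Lemma gen_eq (X Y : 'M[F]_d) : (X <= Y)%MS -> \rank X = \rank Y -> <<X>>%MS = <<Y>>%MS.
Proof. by move=> s r; apply/genmxP; rewrite -(mxrank_leqif_eq s).2 r. Qed.

Lemma ksub_gen (U : ksub F d k) : <<val U>>%MS = val U.
Proof. by case: U => M /= /andP [/eqP]. Qed.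

Lemma ksub_rank (U : ksub F d k) : \rank (val U) = k.
Proof. by case: U => M /= /andP [_ /eqP]. Qed.

Lemma act_ksub (A : 'M[F]_d) (hA : A \in unitmx) (U : ksub F d k) :
  is_ksub k <<val U *m A>>%MS.
Proof.
rewrite /is_ksub genmx_id eqxx /= genmxE mxrankMfree ?row_free_unit //.
by rewrite ksub_rank.
Qed.

Definition actK (A : 'M[F]_d) (hA : A \in unitmx) (U : ksub F d k) : ksub F d k :=
  exist (fun M : 'M[F]_d => is_ksub k M) _ (act_ksub hA U).

Lemma actK_inj A hA : injective (@actK A hA).
Proof.
move=> U V /(congr1 val) /= E.
have /andP [h1 h2] : (val U *m A == val V *m A)%MS by apply/genmxP.
apply: val_inj; rewrite -ksub_gen -[val V]ksub_gen; apply/genmxP/andP; split.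
  by have := submxMr (invmx A) h1; rewrite !mulmxK.
by have := submxMr (invmx A) h2; rewrite !mulmxK.
Qed.

Definition permOf A hA : {perm ksub F d k} := perm (@actK_inj A hA).

Lemma permOfE A hA U : val (@permOf A hA U) = <<val U *m A>>%MS.
Proof. by rewrite permE. Qed.

Lemma permK_PSL A hA : \det A = 1 -> @permOf A hA \in PSL_on F d k.
Proof.
move=> hdet; rewrite inE; apply/existsP; exists A; rewrite hdet eqxx /=.
by apply/forallP => U; rewrite permOfE /slimage map_mx_id.
Qed.

Definition tv (i j : 'I_d) : 'M[F]_d := 1%:M + delta_mx i j.

Lemma det_tv_lt (i j : 'I_d) : (j < i)%N -> \det (tv i j) = 1.
Proof.
move=> hji; rewrite det_trig.
  rewrite big1 // => l _; rewrite !mxE eqxx /=.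
  case: eqP => [->|]; last by rewrite addr0.
  by case: eqP => [E|]; [move: hji; rewrite E ltnn | rewrite addr0].
apply/is_trig_mxP => a b hab; rewrite !mxE.
case: eqP => [E|_]; first by move: hab; rewrite E ltnn.
case: eqP => [Ea|]; last by rewrite add0r.
case: eqP => [Eb|]; last by rewrite add0r.
by move: hab hji; rewrite Ea Eb; lia.
Qed.

Lemma det_tv (i j : 'I_d) : i != j -> \det (tv i j) = 1.
Proof.
move=> hij; case: (ltngtP i j) => h.
- rewrite -det_tr /tv linearD /= trmx1 trmx_delta; exact: det_tv_lt.
- exact: det_tv_lt.
- by move: hij; rewrite (val_inj h) eqxx.
Qed.

Lemma unit_tv (i j : 'I_d) : i != j -> tv i j \in unitmx.
Proof. by move=> h; rewrite unitmxE det_tv // unitr1. Qed.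

Lemma tv_row (v : 'rV[F]_d) (i j m : 'I_d) :
  (v *m tv i j) 0 m = v 0 m + (if m == j then v 0 i else 0).
Proof.
rewrite mulmxDr mulmx1 !mxE; congr (_ + _).
rewrite (bigD1 i) //= big1 => [|l /negbTE hl]; last by rewrite mxE hl mulr0.
rewrite mxE eqxx /= addr0; case: eqP => _; by rewrite ?mulr1 ?mulr0.
Qed.
End Conc3.


Section Conc4.
Local Open Scope ring_scope.
Variable F : finFieldType.
Variables d k : nat.
Hypothesis hk2 : (2 <= k)%N.
Hypothesis hkd : (k.*2 <= d)%N.

Definition pt a b (h : (a < b < 4)%N) : ksub F d k :=
  exist (fun M : 'M[F]_d => is_ksub k M) _ (Mpt_ksub F hk2 hkd h).

Lemma Mpt_gen a b : <<Mpt F d k a b>>%MS = Mpt F d k a b.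
Proof. by rewrite /Mpt genmx_id. Qed.

Lemma tv_fix a b (h : (a < b < 4)%N) (i j : 'I_d) (hij : i != j) :
  (~~ inS k a b i) || inS k a b j -> permOf k (unit_tv F hij) (pt h) = pt h.
Proof.
move=> hc; apply: val_inj; rewrite permOfE /= -[RHS]Mpt_gen; apply: gen_eq.
  apply/row_subP => r; rewrite row_mul memMpt; apply/forallP => m; apply/implyP => nm.
  have := row_sub r (Mpt F d k a b); rewrite memMpt => /forallP hv.
  rewrite tv_row; have := hv m; rewrite nm /= => /eqP ->; rewrite add0r.
  case: ifP => [/eqP E|_]; last by rewrite eqxx.
  move: hc; rewrite -E (negbTE nm) orbF => hi.
  by have := hv i; rewrite hi.
by rewrite mxrankMfree // row_free_unit unit_tv.
Qed.

Lemma tv_move a b (h : (a < b < 4)%N) (i j : 'I_d) (hij : i != j) :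
  inS k a b i -> ~~ inS k a b j -> permOf k (unit_tv F hij) (pt h) != pt h.
Proof.
move=> hi hj; apply/eqP => /(congr1 val); rewrite permOfE /= => E.
have : ((delta_mx 0 i : 'rV[F]_d) *m tv F i j <= Mpt F d k a b)%MS.
  rewrite -E genmxE; apply: submxMr; rewrite memMpt; apply/forallP => m; apply/implyP => nm.
  rewrite mxE eqxx /=; case: (m =P i) => [Em|_]; last by rewrite mulr0n eqxx.
  by move: nm; rewrite Em hi.
rewrite memMpt => /forallP /(_ j); rewrite hj /= tv_row eqxx !mxE eqxx (eq_sym j i) (negbTE hij) /=.
by rewrite eqxx add0r oner_eq0.
Qed.

Lemma fixG_coord a b (sigma : {rmorphism F -> F}) (A : 'M[F]_d)
  (E : <<map_mx sigma (Mpt F d k a b) *m A>>%MS = Mpt F d k a b) (j m : 'I_d) :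
  inS k a b j -> ~~ inS k a b m -> A j m = 0.
Proof.
move=> hj hm.
have Hd : map_mx sigma (delta_mx 0 j : 'rV[F]_d) = delta_mx 0 j.
  by apply/matrixP => x y; rewrite !mxE rmorph_nat.
have : ((delta_mx 0 j : 'rV[F]_d) *m A <= Mpt F d k a b)%MS.
  rewrite -E genmxE -Hd; apply: submxMr; rewrite map_submx memMpt; apply/forallP => l.
  apply/implyP => nl; rewrite mxE eqxx /=; case: (l =P j) => [El|_]; last by rewrite mulr0n eqxx.
  by move: nl; rewrite El hj.
by rewrite memMpt => /forallP /(_ m); rewrite hm /= -rowE mxE => /eqP.
Qed.

Lemma combin (j m : nat) : inS k 0 3 j -> ~~ inS k 0 3 m ->
  [|| (inS k 0 1 j && ~~ inS k 0 1 m), (inS k 0 2 j && ~~ inS k 0 2 m),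
      (inS k 1 3 j && ~~ inS k 1 3 m) | (inS k 2 3 j && ~~ inS k 2 3 m)].
Proof. rewrite /inS; lia. Qed.

Lemma fixG_S03 (sigma : {rmorphism F -> F}) (A : 'M[F]_d) (hA : A \in unitmx) :
  (forall j m : 'I_d, inS k 0 3 j -> ~~ inS k 0 3 m -> A j m = 0) ->
  <<map_mx sigma (Mpt F d k 0 3) *m A>>%MS = Mpt F d k 0 3.
Proof.
move=> H; rewrite -[RHS]Mpt_gen; apply: gen_eq.
  apply/row_subP => r; rewrite row_mul -map_row.
  have := row_sub r (Mpt F d k 0 3); rewrite memMpt => /forallP hv.
  rewrite memMpt; apply/forallP => m; apply/implyP => nm.
  rewrite !mxE big1 // => l _; rewrite mxE.
  case: (boolP (inS k 0 3 l)) => hl; first by rewrite H // mulr0.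
  by have := hv l; rewrite hl /= => /eqP ->; rewrite rmorph0 mul0r.
by rewrite mxrankMfree ?row_free_unit // mxrank_map.
Qed.
End Conc4.

Unset Implicit Arguments. Set Strict Implicit.

Theorem lemma3p4 (F : finFieldType) (d k : nat)
  (hd : (3 <= d)%N) (hk2 : (2 <= k)%N) (hkd : (k.*2 <= d)%N)
  (G : {group {perm ksub F d k}})
  (hN : (PSL_on F d k <| G)%g)
  (hG : forall p, p \in G -> in_PGammaL p) :
  ~ IBIS G.
Proof.
have h4 : (4 <= d)%N by lia.
pose P a b h := @pt F d k hk2 hkd a b h.
pose p01 := P 0 1 isT; pose p02 := P 0 2 isT; pose p03 := P 0 3 isT.
pose p13 := P 1 3 isT; pose p23 := P 2 3 isT.
pose o0 : 'I_d := Ordinal (leq_trans (isT : (1 <= 4)%N) h4).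
pose o1 : 'I_d := Ordinal (leq_trans (isT : (2 <= 4)%N) h4).
pose o2 : 'I_d := Ordinal (leq_trans (isT : (3 <= 4)%N) h4).
pose o3 : 'I_d := Ordinal h4.
have inG : forall (i j : 'I_d) (hij : i != j), permOf k (unit_tv F hij) \in G.
  move=> i j hij; apply: (subsetP (normal_sub hN)); apply: permK_PSL; exact: det_tv.
have step : forall (Q : seq (ksub F d k)) x g, g \in G ->
    all (fun y => g y == y) Q -> g x != x -> pstab G (rcons Q x) \proper pstab G Q.
  move=> Q x g Hg HQ Hx; apply/properP; split.
    by rewrite -cats1 pstab_cat subsetIl.
  exists g; first by rewrite /pstab !inE Hg HQ.
  by rewrite -cats1 pstab_cat !inE /= (negbTE Hx) !andbF.
pose s := [:: p01; p02; p13; p23].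
pose s' := p03 :: s.
have Hs : strict G s.
  move=> i hi; rewrite (take_nth p01) //.
  case: i hi => [|[|[|[|i]]]] hi //.
  - have h02 : o0 != o2 by []. apply: (step _ _ _ (inG _ _ h02)) => //.
    by apply: tv_move.
  - have h01 : o0 != o1 by []. apply: (step _ _ _ (inG _ _ h01)).
      by rewrite /=; repeat (apply/andP; split); try (apply/eqP; apply: tv_fix).
    by apply: tv_move.
  - have h10 : o1 != o0 by []. apply: (step _ _ _ (inG _ _ h10)).
      by rewrite /=; repeat (apply/andP; split); try (apply/eqP; apply: tv_fix).
    by apply: tv_move.
  - have h20 : o2 != o0 by []. apply: (step _ _ _ (inG _ _ h20)).
      by rewrite /=; repeat (apply/andP; split); try (apply/eqP; apply: tv_fix).
    by apply: tv_move.
have Hs' : strict G s'.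
  move=> i hi; rewrite (take_nth p01) //.
  case: i hi => [|[|[|[|[|i]]]]] hi //.
  - have h01 : o0 != o1 by []. apply: (step _ _ _ (inG _ _ h01)) => //.
    by apply: tv_move.
  - have h03 : o0 != o3 by []. apply: (step _ _ _ (inG _ _ h03)).
      by rewrite /=; repeat (apply/andP; split); try (apply/eqP; apply: tv_fix).
    by apply: tv_move.
  - have h21 : o2 != o1 by []. apply: (step _ _ _ (inG _ _ h21)).
      by rewrite /=; repeat (apply/andP; split); try (apply/eqP; apply: tv_fix).
    by apply: tv_move.
  - have h10 : o1 != o0 by []. apply: (step _ _ _ (inG _ _ h10)).
      by rewrite /=; repeat (apply/andP; split); try (apply/eqP; apply: tv_fix).
    by apply: tv_move.
  - have h20 : o2 != o0 by []. apply: (step _ _ _ (inG _ _ h20)).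
      by rewrite /=; repeat (apply/andP; split); try (apply/eqP; apply: tv_fix).
    by apply: tv_move.
apply: (not_IBIS_of Hs Hs') => //.
apply/setP => g; rewrite !inE /=.
case Hg: (g \in G) => //=.
apply/idP/idP; last by case/andP.
case/and5P => H01 H02 H13 H23 _; rewrite H01 H02 H13 H23 !andbT.
have [sigma [A [hA hp]]] := hG g Hg.
have E : forall a b (h : (a < b < 4)%N), g (P a b h) == P a b h ->
    <<map_mx sigma (Mpt F d k a b) *m A>>%MS = Mpt F d k a b.
  by move=> a b h /eqP /(congr1 val); rewrite hp.
apply/eqP; apply: val_inj; rewrite hp /=; apply: fixG_S03 => // j m hj hm.
case/or4P: (combin hk2 hkd hj hm) => /andP [hj' hm'].
- exact: (fixG_coord (E 0 1 isT H01) hj' hm').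
- exact: (fixG_coord (E 0 2 isT H02) hj' hm').
- exact: (fixG_coord (E 1 3 isT H13) hj' hm').
- exact: (fixG_coord (E 2 3 isT H23) hj' hm').
Qed.
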